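(* For $t>0$ and $0<v<1$ let $$L_v(t):=\frac{1}{\log t}\left(\frac{1-v}{v}\left(t-t^{1-v}\right)+\frac{v}{1-v}\left(t^{1-v}-1\right)\right)\quad (t\neq 1),\qquad L_v(1):=1.$$ Then for each fixed $t$ with $0<t\le 1$ the function $v\mapsto L_v(t)$ is increasing on $(0,1)$, and for each fixed $t\ge 1$ the function $v\mapsto L_v(t)$ is decreasing on $(0,1)$.
   Context: $L_v(t)$ is the representing function of the weighted logarithmic mean; the value at $t=1$ is its limit as $t\to1$. *)

(* Defs.v *)
From Stdlib Require Import Reals.
Open Scope R_scope.

Definition Lv (v t : R) : R :=
  if Req_EM_T t 1 then 1
  else / ln t * ((1 - v) / v * (t - Rpower t (1 - v))
                 + v / (1 - v) * (Rpower t (1 - v) - 1)).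

(* Main.v *)
Require Import Defs.
From Stdlib Require Import Reals.
From Coquelicot Require Import Coquelicot.
From Stdlib Require Import Lra Psatz.
Open Scope R_scope.

Definition G (s v : R) : R :=
  (1 - v) / v * (exp s - exp ((1 - v) * s)) + v / (1 - v) * (exp ((1 - v) * s) - 1).

Definition dG (s v : R) : R :=
  - (exp s - exp ((1 - v) * s)) / (v * v)
  + (1 - v) / v * (s * exp ((1 - v) * s))
  + (exp ((1 - v) * s) - 1) / ((1 - v) * (1 - v))
  - v / (1 - v) * (s * exp ((1 - v) * s)).

Lemma G_derive s v : 0 < v < 1 -> is_derive (G s) v (dG s v).
Proof.
  intros Hv. unfold G, dG.
  auto_derive.
  - repeat split; lra.
  - replace (1 + - v) with (1 - v) by ring. field. split; lra.
Qed.

Lemma dG_nonpos s v : 0 < v < 1 -> dG s v <= 0.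
Proof.
  intros Hv.
  set (p := 1 - v).
  assert (Hp : 0 < p) by (unfold p; lra).
  set (A := exp ((1 - v) * s)).
  set (B := exp (v * s)).
  set (C := exp (- ((1 - v) * s))).
  assert (HA : 0 < A) by apply exp_pos.
  assert (Hs : exp s = A * B).
  { unfold A, B. rewrite <- exp_plus. f_equal. ring. }
  assert (HAC : A * C = 1).
  { unfold A, C. rewrite <- exp_plus. replace ((1 - v) * s + - ((1 - v) * s)) with 0 by ring. apply exp_0. }
  assert (HB : 1 + v * s <= B) by apply exp_ineq1_le.
  assert (HC : 1 + - ((1-v) * s) <= C) by apply exp_ineq1_le.
  assert (Hk : - p*p*(B-1) + s*p*v*(p-v) + v*v*(1-C) <= 0).
  { assert (0 <= p*p*(B - 1 - v*s)) by (apply Rmult_le_pos; [nra|lra]).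
    assert (0 <= v*v*(C - 1 + p*s)) by (apply Rmult_le_pos; [nra|unfold p; lra]).
    unfold p in *. nra. }
  assert (Hh : - p*p*(A*B - A) + s*p*v*(p-v)*A + v*v*(A-1) <= 0).
  { replace (- p*p*(A*B - A) + s*p*v*(p-v)*A + v*v*(A-1))
      with (A * (- p*p*(B-1) + s*p*v*(p-v) + v*v*(1-C))).
    - nra.
    - replace (v*v*(A-1)) with (A*(v*v*(1-C))). ring.
      replace (A*(v*v*(1-C))) with (v*v*(A - A*C)) by ring. rewrite HAC. ring. }
  unfold dG. rewrite Hs. fold A.
  replace (- (A * B - A) / (v * v) + (1 - v) / v * (s * A) + (A - 1) / ((1 - v) * (1 - v)) -
           v / (1 - v) * (s * A))
    with ((- p*p*(A*B - A) + s*p*v*(p-v)*A + v*v*(A-1)) / (v*v*p*p)).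
  2:{ unfold p. field. lra. }
  unfold Rdiv. apply Rmult_le_0_r; [exact Hh|]. left. apply Rinv_0_lt_compat. repeat apply Rmult_lt_0_compat; lra. 
Qed.


Lemma G_decr s v1 v2 : 0 < v1 < 1 -> 0 < v2 < 1 -> v1 <= v2 -> G s v2 <= G s v1.
Proof.
  intros H1 H2 H12.
  destruct (Req_dec v1 v2) as [E|N]; [subst; lra|].
  destruct (MVT_gen (G s) v1 v2 (dG s)) as [c [Hc Heq]].
  - intros x Hx. apply G_derive.
    rewrite Rmin_left in Hx by lra. rewrite Rmax_right in Hx by lra. lra.
  - intros x Hx. rewrite Rmin_left in Hx by lra. rewrite Rmax_right in Hx by lra.
    apply continuity_pt_filterlim. apply (ex_derive_continuous (G s)).
    eexists. apply G_derive. lra.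
  - rewrite Rmin_left in Hc by lra. rewrite Rmax_right in Hc by lra.
    assert (dG s c <= 0) by (apply dG_nonpos; lra).
    assert (dG s c * (v2 - v1) <= 0) by (apply Rmult_le_0_r; lra). lra.
Qed.

Lemma Lv_eq v t : 0 < t -> t <> 1 -> Lv v t = G (ln t) v / ln t.
Proof.
  intros Ht Ht1. unfold Lv, G, Rpower.
  destruct (Req_EM_T t 1) as [E|_]; [contradiction|].
  rewrite exp_ln by lra. unfold Rdiv at 3. ring.
Qed.

Theorem proposition2p7 :
  (forall t : R, 0 < t <= 1 ->
     forall v1 v2 : R, 0 < v1 < 1 -> 0 < v2 < 1 -> v1 <= v2 ->
       Lv v1 t <= Lv v2 t) /\
  (forall t : R, 1 <= t ->
     forall v1 v2 : R, 0 < v1 < 1 -> 0 < v2 < 1 -> v1 <= v2 ->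
       Lv v2 t <= Lv v1 t).
Proof.
  split.
  - intros t Ht v1 v2 H1 H2 H12.
    destruct (Req_dec t 1) as [E|N].
    { subst. unfold Lv. destruct (Req_EM_T 1 1); [lra|contradiction]. }
    rewrite !Lv_eq by lra.
    assert (Hl : ln t < 0) by (rewrite <- ln_1; apply ln_increasing; lra).
    pose proof (G_decr (ln t) v1 v2 H1 H2 H12).
    assert (/ ln t < 0) by (apply Rinv_lt_0_compat; lra).
    unfold Rdiv. nra.
  - intros t Ht v1 v2 H1 H2 H12.
    destruct (Req_dec t 1) as [E|N].
    { subst. unfold Lv. destruct (Req_EM_T 1 1); [lra|contradiction]. }
    rewrite !Lv_eq by lra.
    assert (Hl : 0 < ln t) by (rewrite <- ln_1; apply ln_increasing; lra).
    pose proof (G_decr (ln t) v1 v2 H1 H2 H12).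
    unfold Rdiv. apply Rmult_le_compat_r; [|lra].
    left. apply Rinv_0_lt_compat. lra.
Qed.
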